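(* Let $p_0\in P_N$, $m\ge1$, $\beta\ge0$, and let $\Lambda_m$ be the set of irreducible $\nu\in\Sigma_{P_N}$ with $p_0\in\mathrm{supp}\,\nu$ and $|\mathrm{supp}\,\nu|=2m$. Then $\sum_{\nu\in\Lambda_m}\varphi_\beta(\nu)\le5^{m-1}\alpha_0(\beta)^m$.
   Context: $G=\mathbb Z_n$, $\rho$ faithful unitary one-dimensional. On $\mathbb Z^4$: $P_N$ is the set of oriented plaquettes (each with its opposite $-p$) with vertices in $B_N=[-N,N]^4\cap\mathbb Z^4$. A 2-form is $\nu:P_N\to G$ with $\nu_{-p}=-\nu_p$; $\Sigma_{P_N}$ is the set of closed 2-forms, i.e. $\sum_{p\in\partial c}\nu_p=0$ for every oriented 3-cell $c$ in $B_N$ (with $\partial c$ its six oriented boundary plaquettes); equivalently $\nu=d\sigma$ for some $G$-valued 1-form $\sigma$. $\varphi_r(g)=e^{r(\mathrm{Re}\rho(g)-1)}$, $\varphi_\beta(\nu)=\prod_{p\in P_N}\varphi_\beta(\nu_p)$, $\alpha_0(r)=\sum_{g\ne0}\varphi_r(g)^2$. $\nu$ is irreducible if there is no non-trivial $\nu'\in\Sigma_{P_N}$, $\nu'\neq\nu$, with $\nu'=\nu|_{\mathrm{supp}\,\nu'}$. *)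

(* Defs.v *)
From HB Require Import structures.
From mathcomp Require Import all_boot all_order all_algebra.
From mathcomp Require Import complex.
From mathcomp Require Import reals sequences exp.

Set Implicit Arguments.
Unset Strict Implicit.
Unset Printing Implicit Defensive.

Import Order.TTheory GRing.Theory Num.Theory.
Local Open Scope ring_scope.

(* The box B_N = [-N,N]^4 ∩ Z^4.  A coordinate c : 'I_(2N+1) represents the *)
(* integer c - N, so vertices of B_N are functions 'I_4 -> 'I_(2N+1).       *)
Definition vert (N : nat) := {ffun 'I_4 -> 'I_(N.*2).+1}.

(* x + e_i (only used when coordinate i of x is < 2N, i.e. stays in B_N). *)
Definition vshift (N : nat) (x : vert N) (i : 'I_4) : vert N :=
  [ffun k => if k == i then inord (x k).+1 else x k].

(* The oriented plaquette (x, i, j), i <> j, is the unit square with vertices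
   x, x+e_i, x+e_i+e_j, x+e_j (in this order); all vertices lie in B_N iff
   coordinates i and j of x are < 2N. *)
Definition is_plaq (N : nat) (q : vert N * 'I_4 * 'I_4) : bool :=
  let '(x, i, j) := q in
  [&& i != j, (x i < N.*2)%N & (x j < N.*2)%N].

Definition plaq (N : nat) := {q : vert N * 'I_4 * 'I_4 | @is_plaq N q}.

Definition popp (N : nat) (p : plaq N) : plaq N :=
  let '(x, i, j) := val p in insubd p (x, j, i).

Definition form (n N : nat) := {ffun plaq N -> 'Z_n}.

(* value of nu on the oriented plaquette (x,i,j) (0 if not a plaquette) *)
Definition nuv (n N : nat) (nu : form n N) (x : vert N) (i j : 'I_4) : 'Z_n :=
  if insub (x, i, j) is Some p then nu p else 0.

Definition two_form (n N : nat) (nu : form n N) : bool :=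
  [forall p : plaq N, nu (popp p) == - nu p].

(* Sum of nu over the six oriented boundary plaquettes of the oriented 3-cell
   at x spanned by e_i, e_j, e_k (i < j < k); the oppositely oriented cell
   gives the negative of this sum. *)
Definition cell_sum (n N : nat) (nu : form n N) (x : vert N) (i j k : 'I_4)
  : 'Z_n :=
  nuv nu (vshift x i) j k - nuv nu x j k
  - nuv nu (vshift x j) i k + nuv nu x i k
  + nuv nu (vshift x k) i j - nuv nu x i j.

Definition closed_form (n N : nat) (nu : form n N) : bool :=
  [forall x : vert N, forall i : 'I_4, forall j : 'I_4, forall k : 'I_4,
     [&& (i < j)%N, (j < k)%N, (x i < N.*2)%N, (x j < N.*2)%N & (x k < N.*2)%N]
     ==> (cell_sum nu x i j k == 0)].

Definition in_Sigma (n N : nat) (nu : form n N) : bool :=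
  two_form nu && closed_form nu.

Definition supp (n N : nat) (nu : form n N) : {set plaq N} :=
  [set p | nu p != 0].

Definition irreducible_form (n N : nat) (nu : form n N) : bool :=
  [forall nu' : form n N,
     [&& in_Sigma nu', nu' != 0 & nu' != nu] ==>
     ~~ [forall p in supp nu', nu' p == nu p]].

Definition Lambda (n N : nat) (p0 : plaq N) (m : nat) : {set form n N} :=
  [set nu : form n N | [&& in_Sigma nu, irreducible_form nu,
                          p0 \in supp nu & #|supp nu| == m.*2]].

Definition phi (R : realType) (n : nat) (rho : 'Z_n -> R[i]) (r : R) (g : 'Z_n)
  : R := expR (r * (complex.Re (rho g) - 1)).

Definition phi_form (R : realType) (n N : nat) (rho : 'Z_n -> R[i]) (r : R)
  (nu : form n N) : R := \prod_(p : plaq N) phi rho r (nu p).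

Definition alpha0 (R : realType) (n : nat) (rho : 'Z_n -> R[i]) (r : R) : R :=
  \sum_(g : 'Z_n | g != 0) phi rho r g ^+ 2.

(* Main.v *)
Require Import Defs.
From HB Require Import structures.
From mathcomp Require Import all_boot all_order all_algebra.
From mathcomp Require Import complex.
From mathcomp Require Import reals sequences exp.
From mathcomp Require Import zify ring lra.
Import Order.TTheory GRing.Theory Num.Theory.
Local Open Scope ring_scope.
Set Implicit Arguments. Unset Strict Implicit.
Local Notation form := Defs.form.
Local Notation supp := Defs.supp.
Local Notation phi := Defs.phi.

Lemma le_sum_term (R : realDomainType) (I : finType) (F : I -> R) (i : I) :
  (forall j, 0 <= F j) -> F i <= \sum_j F j.
Proof. move=> H; rewrite (bigD1 i) //= lerDl; apply: sumr_ge0 => j _; exact: H. Qed.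

Lemma popp_val N (p : plaq N) :
  val (popp p) = ((val p).1.1, (val p).2, (val p).1.2).
Proof.
case: p => [[[x i] j] H] /=; rewrite /popp /= insubdK //.
move: H; rewrite /is_plaq => /and3P[a b c]; apply/and3P; split => //.
by rewrite eq_sym.
Qed.

Lemma poppK N : involutive (@popp N).
Proof. move=> p; apply: val_inj; rewrite !popp_val /=. by case: p => [[[x i] j] H]. Qed.

Lemma popp_neq N (p : plaq N) : popp p != p.
Proof.
apply/eqP => /(congr1 val); rewrite popp_val; case: p => [[[x i] j] H] /= E.
have eij : j = i by case: E.
by move: H; rewrite /is_plaq eij eqxx.
Qed.

Definition ext n N (mu nu : form n N) : bool :=
  [forall p in supp mu, mu p == nu p].

Definition upd n N (mu : form n N) (q : plaq N) (g : 'Z_n) : form n N :=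
  [ffun p => if p == q then g else if p == popp q then - g else mu p].

Lemma upd_two n N (mu : form n N) q g : two_form mu -> two_form (upd mu q g).
Proof.
move=> /forallP H; apply/forallP => p; rewrite !ffunE.
have hq := popp_neq q.
case: (eqVneq p q) => [->|pq]; first by rewrite (negbTE (popp_neq _)) !eqxx.
case: (eqVneq p (popp q)) => [->|pq'].
  by rewrite poppK eqxx opprK.
have h1 : popp p != q by apply: contra pq' => /eqP <-; rewrite poppK.
have h2 : popp p != popp q.
  by apply: contra pq => /eqP /(can_inj (@poppK N)) /eqP.
rewrite (negbTE h1) (negbTE h2); exact: H.
Qed.

Lemma ext_upd n N (mu nu : form n N) q :
  two_form nu -> ext mu nu -> ext (upd mu q (nu q)) nu.
Proof.
move=> /forallP Hn /forallP He; apply/forallP => p; apply/implyP.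
rewrite inE !ffunE.
case: (eqVneq p q) => [->|pq] //=.
case: (eqVneq p (popp q)) => [->|pq'] /=; first by rewrite (eqP (Hn q)).
move=> Hp; by move: (He p); rewrite inE Hp.
Qed.

Lemma supp_upd n N (mu : form n N) q g :
  two_form mu -> mu q = 0 -> g != 0 -> #|supp (upd mu q g)| = (#|supp mu|).+2.
Proof.
move=> /forallP H mq g0.
have ->: supp (upd mu q g) = q |: (popp q |: supp mu).
  apply/setP => p; rewrite !inE !ffunE.
  case: (eqVneq p q) => [->|pq] //=.
  by case: (eqVneq p (popp q)) => [->|pq'] //=; rewrite oppr_eq0.
have m2 : mu (popp q) = 0 by rewrite (eqP (H q)) mq oppr0.
rewrite !cardsU1 !inE m2 mq eqxx /= eq_sym (negbTE (popp_neq q)).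
by [].
Qed.
Definition cellT N := (vert N * 'I_4 * 'I_4 * 'I_4)%type.

Definition bad n N (mu : form n N) (c : cellT N) : bool :=
  let '(x, i, j, k) := c in
  [&& (i < j)%N, (j < k)%N, (x i < N.*2)%N, (x j < N.*2)%N & (x k < N.*2)%N]
  && (cell_sum mu x i j k != 0).

Definition myslot N (c : cellT N) (s : 'I_6) : vert N * 'I_4 * 'I_4 :=
  let '(x, i, j, k) := c in
  nth (x, i, j) [:: (vshift x i, j, k); (x, j, k); (vshift x j, i, k);
                    (x, i, k); (vshift x k, i, j); (x, i, j)] s.

Definition nuvt n N (mu : form n N) (t : vert N * 'I_4 * 'I_4) : 'Z_n :=
  if insub t is Some p then mu p else 0.

Lemma nuvtE n N (mu : form n N) x i j : nuv mu x i j = nuvt mu (x, i, j).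
Proof. by []. Qed.

Lemma exists_diff n N (mu nu : form n N) x i j k :
  cell_sum mu x i j k != cell_sum nu x i j k ->
  exists s, nuvt mu (myslot (x, i, j, k) s) != nuvt nu (myslot (x, i, j, k) s).
Proof.
move=> H; apply/existsP; apply: contraR H => /existsPn Hs.
have e s := negbNE (Hs s).
move: (e (@Ordinal 6 0 isT)) (e (@Ordinal 6 1 isT)) (e (@Ordinal 6 2 isT))
  (e (@Ordinal 6 3 isT)) (e (@Ordinal 6 4 isT)) (e (@Ordinal 6 5 isT)).
rewrite /myslot /cell_sum /= !nuvtE.
by move=> /eqP -> /eqP -> /eqP -> /eqP -> /eqP -> /eqP ->.
Qed.

Lemma exists_nz n N (mu : form n N) x i j k :
  cell_sum mu x i j k != 0 ->
  exists s, nuvt mu (myslot (x, i, j, k) s) != 0.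
Proof.
move=> H; apply/existsP; apply: contraR H => /existsPn Hs.
have e s := negbNE (Hs s).
move: (e (@Ordinal 6 0 isT)) (e (@Ordinal 6 1 isT)) (e (@Ordinal 6 2 isT))
  (e (@Ordinal 6 3 isT)) (e (@Ordinal 6 4 isT)) (e (@Ordinal 6 5 isT)).
rewrite /myslot /cell_sum /= !nuvtE.
move=> /eqP -> /eqP -> /eqP -> /eqP -> /eqP -> /eqP ->.
by rewrite !subr0 !addr0.
Qed.
Section PhiSec.
Variables (R : realType) (n : nat) (rho : 'Z_n -> R[i]) (beta : R) (N : nat).
Hypothesis phi0 : phi rho beta 0 = 1.

Lemma ph_ge0 g : 0 <= phi rho beta g. Proof. exact: expR_ge0. Qed.
Lemma phf_ge0 (mu : form n N) : 0 <= phi_form rho beta mu.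
Proof. apply: prodr_ge0 => p _; exact: ph_ge0. Qed.
Lemma alpha0_ge0 : 0 <= alpha0 rho beta.
Proof. apply: sumr_ge0 => g _; exact: sqr_ge0. Qed.

Lemma phf_upd (mu : form n N) q g : mu q = 0 -> mu (popp q) = 0 ->
  phi_form rho beta (upd mu q g) =
  phi_form rho beta mu * (phi rho beta g * phi rho beta (- g)).
Proof.
move=> m1 m2.
have E p : phi rho beta (upd mu q g p) = phi rho beta (mu p) *
   (if p == q then phi rho beta g else 1) *
   (if p == popp q then phi rho beta (- g) else 1).
  rewrite ffunE; case: (eqVneq p q) => [->|pq].
    by rewrite m1 phi0 eq_sym (negbTE (popp_neq _)) mulr1 mul1r.
  case: (eqVneq p (popp q)) => [->|pq'].
    by rewrite m2 phi0 mulr1 mul1r.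
  by rewrite !mulr1.
rewrite /phi_form (eq_bigr _ (fun p _ => E p)) !big_split /=.
rewrite -!big_mkcond /= !big_pred1_eq mulrA.
by [].
Qed.

Lemma phf0 : phi_form rho beta (0 : form n N) = 1.
Proof. rewrite /phi_form; apply: big1 => p _; by rewrite ffunE phi0. Qed.

Lemma sum_cross : \sum_(g : 'Z_n | g != 0) phi rho beta g * phi rho beta (- g)
   <= alpha0 rho beta.
Proof.
have E : \sum_(g : 'Z_n | g != 0) phi rho beta (- g) ^+ 2 = alpha0 rho beta.
  rewrite /alpha0 [RHS](reindex_inj oppr_inj) /=.
  by apply: eq_bigl => g; rewrite oppr_eq0.
have L : \sum_(g : 'Z_n | g != 0) phi rho beta g * phi rho beta (- g) <=
   \sum_(g : 'Z_n | g != 0) (phi rho beta g ^+ 2 + phi rho beta (- g) ^+ 2) / 2.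
  apply: ler_sum => g _.
  set a := phi rho beta g; set b := phi rho beta (- g).
  have := sqr_ge0 (a - b). nra.
apply: (le_trans L).
rewrite -mulr_suml big_split /= E /alpha0.
lra.
Qed.
Lemma irr_contra (m : nat) (p0 : plaq N) (mu nu : form n N) :
  nu \in Lambda n p0 m -> ext mu nu -> two_form mu -> (0 < #|supp mu|)%N ->
  #|supp mu| != #|supp nu| -> ~~ closed_form mu.
Proof.
rewrite inE => /and4P[_ Hirr _ _] He Ht Hpos Hne; apply/negP => Hc.
move/forallP: Hirr => /(_ mu) /implyP.
have H : [&& in_Sigma mu, mu != 0 & mu != nu].
  rewrite /in_Sigma Ht Hc /=; apply/andP; split.
    apply: contraTneq Hpos => ->.
    have -> : supp (0 : form n N) = set0 by apply/setP=> p; rewrite !inE ffunE eqxx.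
    by rewrite cards0.
  by apply: contraNneq Hne => ->.
by move=> /(_ H) /negP; apply.
Qed.

Definition Tsum (m : nat) (p0 : plaq N) (mu : form n N) : R :=
  \sum_(nu : form n N) (if (nu \in Lambda n p0 m) && ext mu nu
                        then phi_form rho beta nu else 0).

Lemma claim (m : nat) (p0 : plaq N) t : (t < m)%N -> forall mu : form n N,
  two_form mu -> #|supp mu| = (m - t).*2 ->
  Tsum m p0 mu <= (5 * alpha0 rho beta) ^+ t * phi_form rho beta mu.
Proof.
elim: t => [|t IH] ht mu Hmu Hc.
  rewrite expr0 mul1r.
  apply: (le_trans (y := \sum_(nu : form n N)
     (if nu == mu then phi_form rho beta nu else 0))); last first.
    by rewrite -big_mkcond big_pred1_eq.
  apply: ler_sum => nu _.
  case: ifP => [/andP[HL He]|_]; last by case: ifP => // _; exact: phf_ge0.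
  suff ->: nu = mu by rewrite eqxx.
  move: HL; rewrite inE => /and4P[_ _ _ /eqP Hcn].
  have Hsub : supp mu \subset supp nu.
    apply/subsetP => p hp; have := forallP He p; rewrite hp /= => /eqP E.
    by rewrite inE -E; rewrite inE in hp.
  have Hs : supp mu = supp nu.
    by apply/eqP; rewrite eqEcard Hsub Hcn Hc subn0 leqnn.
  apply/ffunP => p; case hp: (p \in supp mu).
    by have := forallP He p; rewrite hp /= => /eqP ->.
  have h1 : p \notin supp mu by rewrite hp.
  have h2 : p \notin supp nu by rewrite -Hs hp.
  by move: h1 h2; rewrite !inE !negbK => /eqP -> /eqP ->.
have Kge0 : 0 <= (5 * alpha0 rho beta) ^+ t.
  by apply: exprn_ge0; apply: mulr_ge0; [exact: ler0n | exact: alpha0_ge0].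
case: (pickP (bad mu)) => [[[[x i] j] k] Hb | Hn]; last first.
  apply: (le_trans (y := 0)); last first.
    apply: mulr_ge0; last exact: phf_ge0.
    by apply: exprn_ge0; apply: mulr_ge0; [exact: ler0n | exact: alpha0_ge0].
  rewrite le_eqVlt; apply/orP; left; apply/eqP; apply: big1 => nu _.
  case: ifP => // /andP[HL He]; exfalso.
  have : ~~ closed_form mu.
    apply: (irr_contra HL He Hmu).
      by rewrite Hc -mul2n; lia.
    move: (HL); rewrite inE => /and4P[_ _ _ /eqP ->].
    by rewrite Hc -!mul2n; apply/eqP; lia.
  move/negP; apply.
  apply/forallP => x; apply/forallP => i; apply/forallP => j; apply/forallP => k.
  apply/implyP => cond; have := Hn (x, i, j, k).
  by rewrite /bad cond /= => /negbFE.
move: Hb => /= /andP[Hcond Hcs].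
set sl := myslot (x, i, j, k).
pose G (s : 'I_6) (g : 'Z_n) (nu : form n N) : R :=
  if insub (sl s) is Some q then
    (if (mu q == 0) && (g != 0) && (nu \in Lambda n p0 m) && ext (upd mu q g) nu
     then phi_form rho beta nu else 0) else 0.
have G0 s g nu : 0 <= G s g nu.
  by rewrite /G; case: insub => [q|] //; case: ifP => // _; exact: phf_ge0.
have Step1 : Tsum m p0 mu <= \sum_(nu : form n N) \sum_(s : 'I_6) \sum_(g : 'Z_n) G s g nu.
  apply: ler_sum => nu _; case: ifP => [/andP[HL He]|_]; last first.
    by apply: sumr_ge0 => s _; apply: sumr_ge0 => g _; exact: G0.
  move: (HL); rewrite inE => /and4P[/andP[Htn Hcl] _ _ _].
  move/forallP: Hcl => /(_ x) /forallP /(_ i) /forallP /(_ j) /forallP /(_ k).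
  move=> /implyP /(_ Hcond) /eqP Hz.
  have [s Hs] : exists s, nuvt mu (sl s) != nuvt nu (sl s).
    by apply: exists_diff; rewrite Hz.
  move: Hs; rewrite /nuvt; case E: (insub (sl s)) => [q|]; last by rewrite eqxx.
  move=> Hq.
  have mq : mu q = 0.
    case: (eqVneq (mu q) 0) => // hq; move: Hq.
    by have := forallP He q; rewrite inE hq /= => /eqP ->; rewrite eqxx.
  have nq : nu q != 0 by rewrite mq in Hq; rewrite eq_sym.
  have L1 := le_sum_term (F := fun s => \sum_(g : 'Z_n) G s g nu) s
     (fun s' => sumr_ge0 _ (fun g _ => G0 s' g nu)).
  apply: le_trans L1.
  have L2 := le_sum_term (F := fun g => G s g nu) (nu q) (fun g => G0 s g nu).
  apply: le_trans L2.
  by rewrite /G E mq eqxx nq HL (ext_upd _ Htn He) /=.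
apply: (le_trans Step1); rewrite exchange_big /=.
under eq_bigr => s _ do rewrite exchange_big /=.
pose ok (s : 'I_6) := if insub (sl s) is Some q then mu q == 0 else false.
pose X := (5 * alpha0 rho beta) ^+ t * phi_form rho beta mu * alpha0 rho beta.
apply: (le_trans (y := \sum_(s : 'I_6) (if ok s then X else 0))).
  apply: ler_sum => s _; rewrite /G /ok.
  case E: (insub (sl s)) => [q|]; last by rewrite big1 // => g _; rewrite big1.
  case mq: (mu q == 0); last first.
    by rewrite big1 // => g _; rewrite big1.
  have mq0 := eqP mq.
  have m2 : mu (popp q) = 0 by rewrite (eqP (forallP Hmu q)) mq0 oppr0.
  apply: (le_trans (y := \sum_(g : 'Z_n | g != 0)
        (5 * alpha0 rho beta) ^+ t * phi_form rho beta (upd mu q g))).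
    rewrite [X in _ <= X]big_mkcond /=; apply: ler_sum => g _.
    case g0: (g != 0) => /=; last by rewrite big1.
    apply: (IH (ltnW ht) _ (upd_two _ _ Hmu)).
    by rewrite (supp_upd Hmu mq0 g0) Hc -!mul2n; lia.
  under eq_bigr => g _ do rewrite (phf_upd g mq0 m2).
  rewrite -!mulr_sumr mulrA /X; apply: ler_wpM2l.
    by apply: mulr_ge0 => //; exact: phf_ge0.
  exact: sum_cross.
have [s0 Hs0] := exists_nz Hcs.
have Hok0 : ~~ ok s0.
  move: Hs0; rewrite /ok /nuvt; case: (insub _) => [q|] //.
have Hcard : (#|[pred s | ok s]| <= 5)%N.
  apply: (leq_trans (subset_leq_card (B := predC1 s0) _)).
    apply/subsetP => s; rewrite !inE => hs; apply: contraNneq Hok0 => <-.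
    exact: hs.
  by rewrite cardC1 card_ord.
rewrite -big_mkcond sumr_const.
have X0 : 0 <= X.
  by apply: mulr_ge0; [apply: mulr_ge0; [exact: Kge0|exact: phf_ge0]|exact: alpha0_ge0].
apply: (le_trans (y := X * 5%:R)).
  rewrite -[X *+ _]mulr_natr. apply: ler_wpM2l => //. rewrite ler_nat; exact: Hcard.
rewrite /X exprS le_eqVlt; apply/orP; left; apply/eqP; ring.
Qed.
End PhiSec.

Theorem mainTheorem11 (R : realType) (n : nat) (hn : (1 < n)%N)
  (rho : 'Z_n -> R[i])
  (rho_hom : forall g h : 'Z_n, rho (g + h) = rho g * rho h)
  (rho_unitary : forall g : 'Z_n, `|rho g| = 1)
  (rho_faithful : injective rho)
  (N : nat) (p0 : plaq N) (m : nat) (hm : (1 <= m)%N)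
  (beta : R) (hbeta : 0 <= beta) :
  \sum_(nu in Lambda n p0 m) phi_form rho beta nu
    <= 5 ^+ m.-1 * alpha0 rho beta ^+ m.
Proof.
have r0 : rho 0 = 1.
  have h := rho_hom 0 0; rewrite addr0 in h.
  have nz : rho 0 != 0.
    apply/eqP => e; have := rho_unitary 0; rewrite e normr0 => /eqP.
    by rewrite eq_sym oner_eq0.
  by apply: (mulfI nz); rewrite mulr1 -h.
have phi0 : phi rho beta 0 = 1.
  by rewrite /phi r0 /= subrr mulr0 expR0.
pose G (g : 'Z_n) (nu : form n N) : R :=
  if (g != 0) && (nu \in Lambda n p0 m) && ext (upd 0 p0 g) nu
  then phi_form rho beta nu else 0.
have G0 g nu : 0 <= G g nu by rewrite /G; case: ifP => // _; exact: phf_ge0.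
have z0 (p : plaq N) : (0 : form n N) p = 0 by rewrite ffunE.
have two0 : two_form (0 : form n N).
  by apply/forallP => p; rewrite !ffunE oppr0.
apply: (le_trans (y := \sum_(nu : form n N) \sum_(g : 'Z_n) G g nu)).
  rewrite big_mkcond /=; apply: ler_sum => nu _.
  case: ifP => HL; last by apply: sumr_ge0 => g _; exact: G0.
  have L1 := le_sum_term (F := fun g => G g nu) (nu p0) (fun g => G0 g nu).
  apply: le_trans L1.
  move: (HL); rewrite inE => /and4P[/andP[Htn _] _ Hp0 _].
  rewrite inE in Hp0.
  have He0 : ext (0 : form n N) nu.
    by apply/forallP => p; apply/implyP; rewrite inE ffunE eqxx.
  by rewrite /G Hp0 HL (ext_upd p0 Htn He0).
rewrite exchange_big /=.
have hm1 : (m.-1 < m)%N by rewrite prednK.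
apply: (le_trans (y := \sum_(g : 'Z_n | g != 0)
   (5 * alpha0 rho beta) ^+ m.-1 * phi_form rho beta (upd 0 p0 g))).
  rewrite [X in _ <= X]big_mkcond /=; apply: ler_sum => g _.
  rewrite /G; case g0: (g != 0) => /=; last by rewrite big1.

  apply: (claim phi0 p0 hm1 (upd_two p0 g two0)).
  have s0 : #|supp (0 : form n N)| = 0%N.
    apply/eqP; rewrite cards_eq0; apply/eqP/setP => p; by rewrite !inE ffunE eqxx.
  rewrite (supp_upd two0 (z0 p0) g0) s0.
  by rewrite -!mul2n; lia.
under eq_bigr => g _ do rewrite (phf_upd phi0 g (z0 p0) (z0 (popp p0))) (phf0 N phi0) mul1r.
rewrite -mulr_sumr.
have -> : 5 ^+ m.-1 * alpha0 rho beta ^+ m =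
   (5 * alpha0 rho beta) ^+ m.-1 * alpha0 rho beta.
  by rewrite exprMn -mulrA -exprSr prednK.
apply: ler_wpM2l; last exact: sum_cross.
by apply: exprn_ge0; apply: mulr_ge0; [exact: ler0n | exact: alpha0_ge0].
Qed.
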